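(* Let $\mathcal C:m\to l$ and $\mathcal D:l\to n$ be roPGs and $i\in[m]$. Then $[\![\pi^{\mathcal C;\mathcal D}_i]\!]$ equals: $[\![\pi^{\mathcal C}_i]\!]$ if $[\![\pi^{\mathcal C}_i]\!]\in\{\exists^*,\forall^*\}$; $[\![\pi^{\mathcal D}_j]\!]$ if $[\![\pi^{\mathcal C}_i]\!]=j\in[l]$; $[\![\pi^{\mathcal D}_j]\!]$ if $[\![\pi^{\mathcal C}_i]\!]=(r,j)\in\mathbb R\times[l]$ and $[\![\pi^{\mathcal D}_j]\!]\in\{\exists^*,\forall^*\}$; $(r,k)$ if $[\![\pi^{\mathcal C}_i]\!]=(r,j)\in\mathbb R\times[l]$ and $[\![\pi^{\mathcal D}_j]\!]=k\in[n]$; $(r+r',k)$ if $[\![\pi^{\mathcal C}_i]\!]=(r,j)\in\mathbb R\times[l]$ and $[\![\pi^{\mathcal D}_j]\!]=(r',k)\in\mathbb R\times[n]$.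
   Context: Notation: $[k]=\{1,\dots,k\}$; $X+Y$ disjoint union. An roMPG $\mathcal A:m\to n$ is a tuple $(m,n,Q,E,\rho,w)$ with $Q$ a finite set of positions, entrances $[m]$ and exits $[n]$ (pairwise disjoint with $Q$), edges $E\subseteq([m]+Q)\times([n]+Q)$ such that each entrance has exactly one successor and each exit at most one predecessor, roles $\rho:Q\to\{\exists,\forall\}$, weights $w:Q\to\mathbb R$. An roPG is an roMPG in which every element of $[m]+Q$ has at most one successor. For $\mathcal C:m\to l$, $\mathcal D:l\to n$, the sequential composition $\mathcal C;\mathcal D:m\to n$ has positions $Q^{\mathcal C}+Q^{\mathcal D}$ with inherited roles and weights, and edges: the edges of $\mathcal C$ from $[m]+Q^{\mathcal C}$ to $Q^{\mathcal C}$; the edges of $\mathcal D$ from $Q^{\mathcal D}$ to $[n]+Q^{\mathcal D}$; and $(s,s')$ with $s\in[m]+Q^{\mathcal C}$, $s'\in[n]+Q^{\mathcal D}$ whenever some $i\in[l]$ has $(s,i)\in E^{\mathcal C}$ ($i$ as exit of $\mathcal C$) and $(i,s')\in E^{\mathcal D}$ ($i$ as entrance of $\mathcal D$); no other edges. It is again an roPG. For an roPG $\mathcal C:m\to n$ and entrance $i$, $\pi^{\mathcal C}_i=(s_j)_{j\in J}$ ($J=\{0,\dots,M\}$ or $J=\mathbb N$) is the unique sequence with $s_0=i$, $(s_j,s_{j+1})\in E$ whenever $j,j+1\in J$, and $s_M$ without successor if $J$ is finite. An infinite play satisfies the MP condition if $\liminf_{N\to\infty}\frac1N\sum_{j=1}^Nw(s_j)\ge0$.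 With $T(X)=X+\mathbb R\times X+\{\exists^*,\forall^*\}$, the denotation $[\![\pi]\!]\in T([n])$ of a play $\pi=(s_j)_{j\in J}$ is: $s_1$ if $J=\{0,1\}$ and $s_1$ is an exit; $(\sum_{j=1}^{M-1}w(s_j),s_M)$ if $J=\{0,..,M\}$, $M\ge2$, $s_M$ an exit; $\exists^*$ if $J$ is finite and $s_M$ is a position of role $\forall$, or $J$ is infinite and $\pi$ satisfies MP; $\forall^*$ if $J$ is finite and $s_M$ is a position of role $\exists$, or $J$ is infinite and $\pi$ fails MP. *)

(* Defs.v *)
From Stdlib Require Import Reals ClassicalEpsilon.
From Coquelicot Require Import Coquelicot.
From mathcomp Require Import ssreflect ssrfun ssrbool eqtype ssrnat seq choice fintype.

Set Implicit Arguments.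
Unset Strict Implicit.
Unset Printing Implicit Defensive.

Inductive Role := Exists | Forall.

(* roMPG A : m -> n.  Entrances are 'I_m, exits 'I_n, positions the finite
   type [pos A]; these are disjoint thanks to the sum types.
   The edge relation E ⊆ ([m]+Q) × ([n]+Q) is a boolean relation. *)
Record roMPG (m n : nat) := RoMPG {
  pos : finType;
  edge : 'I_m + pos -> 'I_n + pos -> bool;
  role : pos -> Role;
  weight : pos -> R
}.
Arguments pos {m n} _.
Arguments edge {m n} _ _ _.
Arguments role {m n} _ _.
Arguments weight {m n} _ _.

Definition is_roMPG m n (A : roMPG m n) : Prop :=
  (forall i : 'I_m, exists! t, edge A (inl i) t) /\
  (forall (k : 'I_n) s s', edge A s (inl k) -> edge A s' (inl k) -> s = s').

Definition is_roPG m n (A : roMPG m n) : Prop :=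
  is_roMPG A /\ (forall s t t', edge A s t -> edge A s t' -> t = t').

Definition seq_edge m l n (C : roMPG m l) (D : roMPG l n)
  (s : 'I_m + (pos C + pos D)) (s' : 'I_n + (pos C + pos D)) : bool :=
  let sC : option ('I_m + pos C) :=
    match s with inl i => Some (inl i) | inr (inl q) => Some (inr q) | inr (inr _) => None end in
  let sD : option (pos D) :=
    match s with inr (inr q) => Some q | _ => None end in
  let tC : option (pos C) :=
    match s' with inr (inl q) => Some q | _ => None end in
  let tD : option ('I_n + pos D) :=
    match s' with inl k => Some (inl k) | inr (inr q) => Some (inr q) | inr (inl _) => None end in
  match sC, tC with
  | Some a, Some b => edge C a (inr b)
  | _, _ => false
  end
  ||
  match sD, tD with
  | Some a, Some b => edge D (inr a) b
  | _, _ => false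
  end
  ||
  match sC, tD with
  | Some a, Some b => [exists j : 'I_l, edge C a (inl j) && edge D (inl j) b]
  | _, _ => false
  end.

Definition seqcomp m l n (C : roMPG m l) (D : roMPG l n) : roMPG m n :=
  @RoMPG m n (pos C + pos D)%type (@seq_edge m l n C D)
    (fun q => match q with inl a => role C a | inr b => role D b end)
    (fun q => match q with inl a => weight C a | inr b => weight D b end).

Inductive Tres (X : Type) :=
  | TExit of X
  | TPay of R & X
  | TEx
  | TAll.
Arguments TEx {X}.
Arguments TAll {X}.

Section Play.
Variables (m n : nat) (A : roMPG m n) (i : 'I_m).

Definition succ (s : 'I_m + pos A) : option ('I_n + pos A) :=
  [pick t | edge A s t].

(* play_st k = s_{k+1} of the play pi_i = (s_j)_j, or None if the play
   has ended before index k+1. *)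
Fixpoint play_st (k : nat) : option ('I_n + pos A) :=
  match k with
  | 0 => succ (inl i)
  | k'.+1 => match play_st k' with
             | Some (inr q) => succ (inr q)
             | _ => None
             end
  end.

Definition play_w (k : nat) : R :=
  match play_st k with Some (inr q) => weight A q | _ => 0%R end.

Fixpoint psum (f : nat -> R) (N : nat) : R :=
  match N with 0 => 0%R | N'.+1 => (psum f N' + f N')%R end.

Definition play_MP : Prop :=
  Rbar_le (Rbar.Finite 0%R) (LimInf_seq (fun N => (/ INR N * psum play_w N)%R)).

Definition denot : Tres 'I_n :=
  match excluded_middle_informative (exists k e, play_st k = Some (inl e)) with
  | left H =>
      (* finite play ending at exit s_M = e, M = k+1 *)
      let (k, H1) := constructive_indefinite_description _ H in
      let (e, _) := constructive_indefinite_description _ H1 in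
      match k with
      | 0 => TExit e
      | _ => TPay (psum play_w k) e      (* sum_{j=1}^{M-1} w(s_j) *)
      end
  | right _ =>
      match excluded_middle_informative
              (exists k q, play_st k = Some (inr q) /\ play_st k.+1 = None) with
      | left H =>
          let (k, H1) := constructive_indefinite_description _ H in
          let (q, _) := constructive_indefinite_description _ H1 in
          match role A q with Forall => TEx | Exists => TAll end
      | right _ =>
          if excluded_middle_informative play_MP then TEx else TAll
      end
  end.

End Play.

(* Main.v *)
Require Import Defs.
From Stdlib Require Import Reals.
From mathcomp Require Import ssreflect ssrfun ssrbool eqtype ssrnat fintype.
From Stdlib Require Import Lra Lia ClassicalEpsilon FunctionalExtensionality.
From Coquelicot Require Import Coquelicot.
From mathcomp Require Import seq.

Section Analysis.
Local Open Scope R_scope.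

Lemma close_LimInf (u v : nat -> R) (l : Rbar) :
  is_LimInf_seq u l ->
  (forall eps, 0 < eps -> exists N, forall n, (N <= n)%coq_nat -> Rabs (u n - v n) < eps) ->
  is_LimInf_seq v l.
Proof.
case: l => [l||] /= Hu Hc.
- move=> eps.
  have he : 0 < eps / 2 by case: eps => e he /=; lra.
  have [N0 HN0] := Hc _ he.
  have [Hu1 [N1 HN1]] := Hu (mkposreal _ he).
  split.
  + move=> N; have [n [Hn Hun]] := Hu1 (Nat.max N N0).
    exists n; split; first lia.
    have := Rabs_def2 _ _ (HN0 n ltac:(lia)). simpl in Hun. lra.
  + exists (Nat.max N0 N1) => n Hn.
    have := Rabs_def2 _ _ (HN0 n ltac:(lia)). have := HN1 n ltac:(lia). simpl. lra.
- move=> M.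
  have [N0 HN0] := Hc 1 Rlt_0_1.
  have [N1 HN1] := Hu (M + 1).
  exists (Nat.max N0 N1) => n Hn.
  have := Rabs_def2 _ _ (HN0 n ltac:(lia)). have := HN1 n ltac:(lia). lra.
- move=> M N.
  have [N0 HN0] := Hc 1 Rlt_0_1.
  have [n [Hn Hun]] := Hu (M - 1) (Nat.max N N0).
  exists n; split; first lia.
  have := Rabs_def2 _ _ (HN0 n ltac:(lia)). lra.
Qed.
Lemma psum_bound (g : nat -> R) (B : R) :
  (forall t, Rabs (g t) <= B) -> forall t, Rabs (psum g t) <= B * INR t.
Proof.
move=> Hg; elim=> [|t IH]; first by rewrite /= Rabs_R0; lra.
change (psum g t.+1) with (psum g t + g t). rewrite S_INR. have := Rabs_triang (psum g t) (g t). have := Hg t. lra.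
Qed.

Lemma shift_close (f g : nat -> R) (K : nat) (c B : R) :
  (forall t, psum f (K + t)%nat = c + psum g t) -> (forall t, Rabs (g t) <= B) ->
  forall eps, 0 < eps -> exists N, forall n, (N <= n)%coq_nat ->
    Rabs (/ INR (n + K) * psum f (n + K) - / INR n * psum g n) < eps.
Proof.
move=> Hf Hg eps he.
have B0 : 0 <= B by have := Hg 0%nat; have := Rabs_pos (g 0%nat); lra.
set M := Rabs c + B * INR K.
have M0 : 0 <= M by have := Rabs_pos c; have := pos_INR K; rewrite /M; nra.
have [N HN] := INR_unbounded (M / eps).
exists N.+1 => n Hn.
have Tp : 0 < INR n by apply: lt_0_INR; lia.
have TN : INR N <= INR n by apply: le_INR; lia.
have KK := pos_INR K.
rewrite (addnC n K).
rewrite Hf plus_INR.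
set T := INR n in Tp TN *. set G := psum g n. set k := INR K in KK M0 *.
have HG : Rabs G <= B * T by apply: psum_bound.
have E : / (k + T) * (c + G) - / T * G = (c * T - G * k) / (T * (T + k)).
  field; split; lra.
rewrite E.
have Hc1 := Rle_abs c. have Hc2 := Rle_abs (- c). rewrite Rabs_Ropp in Hc2.
have HG1 := Rle_abs G. have HG2 := Rle_abs (- G). rewrite Rabs_Ropp in HG2.
have Hden : 0 < T * (T + k) by nra.
have HM : M < eps * T.
  have : M / eps < T by lra.
  move/(Rlt_div_l _ _ _ he). lra.
have P1 : 0 <= (Rabs c - c) * T by apply: Rmult_le_pos; lra.
have P2 : 0 <= (Rabs c + c) * T by apply: Rmult_le_pos; lra.
have P3 : 0 <= (B * T + G) * k by apply: Rmult_le_pos; lra.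
have P4 : 0 <= (B * T - G) * k by apply: Rmult_le_pos; lra.
have Hnum1 : c * T - G * k <= M * T.
  rewrite /M -/k. nra.
have Hnum2 : - (M * T) <= c * T - G * k.
  rewrite /M -/k. nra.
have HMT : M * T < eps * (T * (T + k)).
  have : M * T < eps * T * T by nra.
  have : 0 <= eps * T * k by apply: Rmult_le_pos; nra.
  nra.
apply: Rabs_def1.
- apply/Rlt_div_l; first lra. lra.
- have -> : - eps = (- eps * (T * (T + k))) / (T * (T + k)) by field; lra.
  apply: Rmult_lt_compat_r; first by apply: Rinv_0_lt_compat.
  lra.
Qed.

Lemma shift_LimInf (f g : nat -> R) (K : nat) (c B : R) :
  (forall t, psum f (K + t)%nat = c + psum g t) -> (forall t, Rabs (g t) <= B) ->
  LimInf_seq (fun N => / INR N * psum f N) = LimInf_seq (fun N => / INR N * psum g N).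
Proof.
move=> Hf Hg.
have [l Hl] := ex_LimInf_seq (fun N => / INR N * psum f N).
rewrite (is_LimInf_seq_unique _ _ Hl); symmetry; apply: is_LimInf_seq_unique.
have Hl' := proj1 (is_LimInf_seq_ind_k _ K l) Hl.
apply: (close_LimInf _ _ _ Hl') => eps he.
have [N HN] := @shift_close _ _ _ _ _ Hf Hg _ he; exists N => n Hn; exact: HN n Hn.
Qed.

Definition wbound {a b} (A : roMPG a b) : R :=
  foldr (fun q acc => Rabs (weight A q) + acc) 0 (enum (Defs.pos A)).

Lemma wbound_ge {a b} (A : roMPG a b) q : Rabs (weight A q) <= wbound A /\ 0 <= wbound A.
Proof.
rewrite /wbound; have : q \in enum (Defs.pos A) by rewrite mem_enum.
elim: (enum _) => [|x s IH] //= Hin.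
have Hx := Rabs_pos (weight A x).
move: Hin; rewrite inE => /orP [/eqP ->|Hin].
  have : 0 <= foldr (fun q acc => Rabs (weight A q) + acc) 0 s.
    elim: s {IH} => [|y s IHs] /=; [lra|have := Rabs_pos (weight A y); lra].
  lra.
have [H1 H2] := IH Hin; lra.
Qed.
Lemma wbound_pos {a b} (A : roMPG a b) : 0 <= wbound A.
Proof.
rewrite /wbound; elim: (enum _) => [|y s IHs] /=; [lra|have := Rabs_pos (weight A y); lra].
Qed.
End Analysis.

Section Gen.
Variables (m n : nat) (A : roMPG m n) (i : 'I_m).
Local Notation st := (play_st A i).

Lemma st_next_some {k} : st k.+1 <> None -> exists q, st k = Some (inr q).
Proof. rewrite /=. case: (st k) => [[e|q]|] //; eauto. Qed.

Lemma st_mono_d d {k} : st (k + d) <> None -> st k <> None.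
Proof.
elim: d => [|d IH]; rewrite ?addn0 // addnS => H; apply: IH.
by have [q ->] := st_next_some H.
Qed.

Lemma st_before {k k'} : (k' < k)%N -> st k <> None -> exists q, st k' = Some (inr q).
Proof.
move=> Hlt H; apply: st_next_some; apply: (@st_mono_d (k - k'.+1)).
by rewrite subnKC.
Qed.

Lemma st_none_d k d : st k = None -> st (k + d) = None.
Proof.
move=> H; case E: (st (k + d)) => [x|] //.
by exfalso; apply: (@st_mono_d d k) => //; rewrite E.
Qed.

Lemma exit_uniq {k k' e e'} : st k = Some (inl e) -> st k' = Some (inl e') -> k = k' /\ e = e'.
Proof.
move=> H H'; case: (ltngtP k k') => Hk.
- have [q] := st_before (k:=k') Hk (ltac:(by rewrite H')). by rewrite H.
- have [q] := st_before (k:=k) Hk (ltac:(by rewrite H)). by rewrite H'.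
- subst; rewrite H in H'; by case: H'.
Qed.

Lemma after_dead k q d : st k = Some (inr q) -> st k.+1 = None -> st (k.+1 + d) = None.
Proof. by move=> _ H; apply: st_none_d. Qed.

Lemma dead_pos {k q k'} : st k = Some (inr q) -> st k.+1 = None ->
  st k' <> None -> (k' <= k)%N.
Proof.
move=> H1 H2 H3; case: (leqP k' k) => // Hk.
exfalso; apply: H3; rewrite -(subnKC Hk); exact: st_none_d.
Qed.

Lemma denot_exit k e : st k = Some (inl e) ->
  denot A i = match k with 0 => TExit e | _.+1 => TPay (psum (play_w A i) k) e end.
Proof.
move=> H; rewrite /denot; case: excluded_middle_informative => [Hex|Hn]; last first.
  by exfalso; apply: Hn; eauto.
case: (constructive_indefinite_description _ Hex) => k' H1.
case: (constructive_indefinite_description _ H1) => e' H'.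
by have [-> ->] := exit_uniq H' H.
Qed.

Lemma denot_dead k q : st k = Some (inr q) -> st k.+1 = None ->
  denot A i = match role A q with Defs.Forall => TEx | Defs.Exists => TAll end.
Proof.
move=> H1 H2; rewrite /denot; case: excluded_middle_informative => [Hex|Hn].
  exfalso; case: Hex => k' [e He].
  have Hle := dead_pos (k':=k') H1 H2 (ltac:(by rewrite He)).
  move: Hle; rewrite leq_eqVlt => /orP [/eqP Ek|Hlt].
    by subst; rewrite H1 in He.
  have [q'] := st_before (k:=k) Hlt (ltac:(by rewrite H1)). by rewrite He.
case: excluded_middle_informative => [Hd|Hnd]; last first.
  by exfalso; apply: Hnd; eauto.
case: (constructive_indefinite_description _ Hd) => k' H1'.
case: (constructive_indefinite_description _ H1') => q' [Hq' Hn'].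
have Hk1 := dead_pos (k':=k') H1 H2 (ltac:(by rewrite Hq')).
have Hk2 := dead_pos (k':=k) Hq' Hn' (ltac:(by rewrite H1)).
have Ek : k' = k by apply/eqP; rewrite eqn_leq Hk1 Hk2.
subst; rewrite H1 in Hq'; by case: Hq' => ->.
Qed.

Lemma denot_inf : (forall k, exists q, st k = Some (inr q)) ->
  denot A i = if excluded_middle_informative (play_MP A i) then TEx else TAll.
Proof.
move=> Hall; rewrite /denot; case: excluded_middle_informative => [Hex|_].
  by exfalso; case: Hex => k [e He]; have [q] := Hall k; rewrite He.
case: excluded_middle_informative => [Hd|_] //.
exfalso; case: Hd => k [q [_ Hn]]; have [q'] := Hall k.+1; by rewrite Hn.
Qed.
End Gen.

Lemma edge_succ {a b} {A : roMPG a b} (HA : is_roPG A) s t :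
  edge A s t = (@succ _ _ A s == Some t).
Proof.
rewrite /succ; case: pickP => [t0 Ht0|Hn].
- apply/idP/eqP => [Ht|[<-]] //. by rewrite (HA.2 _ _ _ Ht0 Ht).
- by rewrite Hn.
Qed.

Lemma succ_entr {a b} {A : roMPG a b} (HA : is_roPG A) j : exists x, @succ _ _ A (inl j) = Some x.
Proof.
have [t [Ht _]] := HA.1.1 j. exists t; apply/eqP; by rewrite -edge_succ.
Qed.

Lemma pick_eq (T : finType) (P : pred T) (X : option T) :
  (forall t, P t = (X == Some t)) -> [pick t | P t] = X.
Proof.
move=> H; case: pickP => [t Ht|Hn].
- by move: Ht; rewrite H => /eqP.
- case: X H => [x|] H //; have := Hn x; by rewrite H eqxx.
Qed.

Section Comp.
Variables (m l n : nat) (C : roMPG m l) (D : roMPG l n).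
Hypotheses (HC : is_roPG C) (HD : is_roPG D).

Definition embD (x : 'I_n + Defs.pos D) : 'I_n + (Defs.pos C + Defs.pos D) :=
  match x with inl k => inl k | inr q => inr (inr q) end.

Lemma ex_comp a b : [exists j, edge C a (inl j) && edge D (inl j) b] =
  match @succ _ _ C a with Some (inl j) => edge D (inl j) b | _ => false end.
Proof.
case E: (@succ _ _ C a) => [[j|q]|].
- apply/existsP/idP => [[j' /andP [H1 H2]]|H].
    move: H1; rewrite (edge_succ HC) E => /eqP [->] //.
  exists j; by rewrite H andbT (edge_succ HC) E.
- apply/existsP => [[j' /andP [H1 _]]]; move: H1; by rewrite (edge_succ HC) E.
- apply/existsP => [[j' /andP [H1 _]]]; move: H1; by rewrite (edge_succ HC) E.
Qed.

Lemma succS_C (s : 'I_m + Defs.pos C) :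
  @succ _ _ (seqcomp C D) (match s with inl i => inl i | inr q => inr (inl q) end) =
  match @succ _ _ C s with
  | Some (inr q) => Some (inr (inl q))
  | Some (inl j) => omap embD (@succ _ _ D (inl j))
  | None => None end.
Proof.
rewrite {1}/succ; apply: pick_eq => t.
case: s => [i0|q]; case: t => [k|[q'|q']]; rewrite /= /seq_edge /= ?ex_comp ?orbF /=;
 rewrite ?(edge_succ HC) ?(edge_succ HD);
 case: (@succ _ _ C _) => [[j|q0]|] //=;
 rewrite ?(edge_succ HD); try case: (@succ _ _ D _) => [[k0|q1]|] //=.
all: apply/eqP/eqP => H; (try by case: H => ->); (try by case: H).
Qed.

Lemma succS_D (q : Defs.pos D) :
  @succ _ _ (seqcomp C D) (inr (inr q)) = omap embD (@succ _ _ D (inr q)).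
Proof.
rewrite {1}/succ; apply: pick_eq => t.
case: t => [k|[q'|q']]; rewrite /= /seq_edge /= ?orbF /=;
 rewrite ?(edge_succ HD); case: (@succ _ _ D _) => [[k0|q1]|] //=.
all: apply/eqP/eqP => H; (try by case: H => ->); (try by case: H).
Qed.

Variable i : 'I_m.
Local Notation S := (seqcomp C D).
Local Notation SC := (play_st C i).
Local Notation SS := (play_st S i).

Lemma prefC {k q} : SC k = Some (inr q) -> SS k = Some (inr (inl q)).
Proof.
elim: k q => [|k IH] q /=.
  by move=> H; have := succS_C (inl i); rewrite /= H.
case E: (SC k) => [[j|q0]|] // H; rewrite (IH _ E).
by have := succS_C (inr q0); rewrite /= H.
Qed.

Lemma deadC {k q} : SC k = Some (inr q) -> SC k.+1 = None -> SS k.+1 = None.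
Proof.
move=> H1 /=; rewrite H1 (prefC H1) => H2.
by have := succS_C (inr q); rewrite /= H2.
Qed.

Lemma exitC {k j} : SC k = Some (inl j) -> SS k = omap embD (play_st D j 0).
Proof.
case: k => [|k] /=.
  by move=> H; have := succS_C (inl i); rewrite /= H.
case E: (SC k) => [[j0|q0]|] // H; rewrite (prefC E).
by have := succS_C (inr q0); rewrite /= H.
Qed.

Lemma partD {K j} : SC K = Some (inl j) -> forall t, SS (K + t) = omap embD (play_st D j t).
Proof.
move=> H; elim=> [|t IH]; first by rewrite addn0 (exitC H).
rewrite addnS /= IH; case: (play_st D j t) => [[k|q]|] //=.
exact: succS_D.
Qed.

Lemma wC {k q} : SC k = Some (inr q) -> play_w S i k = play_w C i k.
Proof. by move=> H; rewrite /play_w (prefC H) H. Qed.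

Lemma wD {K j} t : SC K = Some (inl j) -> play_w S i (K + t) = play_w D j t.
Proof. by move=> H; rewrite /play_w (partD H); case: (play_st D j t) => [[]|]. Qed.

Lemma psumC k : (forall k', (k' < k)%N -> exists q, SC k' = Some (inr q)) ->
  psum (play_w S i) k = psum (play_w C i) k.
Proof.
elim: k => [|k IH] H //=.
have [q Hq] := H k (ltnSn k).
rewrite (wC Hq) IH // => k' Hk'; apply: H; exact: ltnW.
Qed.

Lemma psumD {K j} : SC K = Some (inl j) -> forall t,
  psum (play_w S i) (K + t) = (psum (play_w C i) K + psum (play_w D j) t)%R.
Proof.
move=> H; elim=> [|t IH].
  rewrite addn0 psumC /=; first by rewrite Rplus_0_r.
  move=> k' Hk'; apply: (@st_before _ _ C i K k') => //; by rewrite H.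
rewrite addnS /= IH (wD _ H); ring.
Qed.

End Comp.

Lemma trich a b (A : roMPG a b) (HA : is_roPG A) (i : 'I_a) :
  (exists K e, play_st A i K = Some (inl e)) \/
  (exists K q, play_st A i K = Some (inr q) /\ play_st A i K.+1 = None) \/
  (forall k, exists q, play_st A i k = Some (inr q)).
Proof.
case: (classic (exists K e, play_st A i K = Some (inl e))) => [H1|H1]; first by left.
case: (classic (exists K q, play_st A i K = Some (inr q) /\ play_st A i K.+1 = None)) => [H2|H2];
  first by right; left.
right; right; elim=> [|k [q IH]] /=.
  have [x Hx] := succ_entr HA i; rewrite Hx; case: x Hx => [e|q] Hx; last by exists q.
  by exfalso; apply: H1; exists 0%N, e.
rewrite IH; case E: (@succ _ _ A (inr q)) => [[e|q']|]; last 1 first.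
- by exfalso; apply: H2; exists k, q; rewrite /= IH E.
- by exfalso; apply: H1; exists k.+1, e; rewrite /= IH E.
- by exists q'.
Qed.

Theorem proposition3p2 (m l n : nat) (C : roMPG m l) (D : roMPG l n) (i : 'I_m) :
  is_roPG C -> is_roPG D ->
  denot (seqcomp C D) i =
  match denot C i with
  | TEx => TEx
  | TAll => TAll
  | TExit j => denot D j
  | TPay r j =>
      match denot D j with
      | TEx => TEx
      | TAll => TAll
      | TExit k => TPay r k
      | TPay r' k => TPay (r + r')%R k
      end
  end.
Proof.
move=> HC HD.
have [[K [j HK]] | [[K [q [HK HK1]]] | Hinf]] := @trich _ _ C HC i.
- rewrite (@denot_exit _ _ C i _ _ HK).
  have [[t [k Ht]] | [[t [q [Ht Ht1]]] | HinfD]] := @trich _ _ D HD j.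
  + have HS : play_st (seqcomp C D) i (K + t) = Some (inl k).
      by rewrite (@partD _ _ _ C D HC HD i _ _ HK) Ht.
    have Ep := @psumD _ _ _ C D HC HD i _ _ HK t.
    rewrite (@denot_exit _ _ (seqcomp C D) i _ _ HS) Ep.
    case: K HK HS Ep => [|K] HK HS Ep /=; rewrite (@denot_exit _ _ D j _ _ Ht);
      case: t Ht {HS Ep} => [|t] Ht; rewrite ?add0n ?addn0 ?addSn /=.
    all: try (f_equal; simpl; lra).
  + have HS1 : play_st (seqcomp C D) i (K + t) = Some (inr (inr q)).
      by rewrite (@partD _ _ _ C D HC HD i _ _ HK) Ht.
    have HS2 : play_st (seqcomp C D) i (K + t).+1 = None.
      by rewrite -addnS (@partD _ _ _ C D HC HD i _ _ HK) Ht1.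
    rewrite (@denot_dead _ _ (seqcomp C D) i _ _ HS1 HS2) /=.
    by case: K {HK HS1 HS2} => [|K] /=; rewrite (@denot_dead _ _ D j _ _ Ht Ht1); case: (role D q).
  + have HSinf : forall k, exists q, play_st (seqcomp C D) i k = Some (inr q).
      move=> k; case: (ltnP k K) => Hk.
        have [q0 Hq0] := @st_before _ _ C i K k Hk (ltac:(by rewrite HK)).
        by exists (inl q0); apply: (@prefC _ _ _ C D HC HD i).
      have [q0 Hq0] := HinfD (k - K)%N.
      exists (inr q0); rewrite -(subnKC Hk) (@partD _ _ _ C D HC HD i _ _ HK) Hq0 //.
    rewrite (@denot_inf _ _ (seqcomp C D) i HSinf).
    have EMP : play_MP (seqcomp C D) i = play_MP D j.
      rewrite /play_MP (@shift_LimInf _ (play_w D j) K (psum (play_w C i) K) (wbound D)) //.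
        exact: (@psumD _ _ _ C D HC HD i _ _ HK).
      move=> t; rewrite /play_w; case: (play_st D j t) => [[e|q0]|].
      * rewrite Rabs_R0; exact: wbound_pos.
      * by have [? _] := wbound_ge D q0.
      * rewrite Rabs_R0; exact: wbound_pos.
    rewrite EMP.
    by case: K {HK HSinf} => [|K] /=; rewrite (@denot_inf _ _ D j HinfD);
      case: excluded_middle_informative.
- rewrite (@denot_dead _ _ C i _ _ HK HK1).
  rewrite (@denot_dead _ _ (seqcomp C D) i _ _ (@prefC _ _ _ C D HC HD i _ _ HK)
             (@deadC _ _ _ C D HC HD i _ _ HK HK1)) /=.
  by case: (role C q).
- have HSinf : forall k, exists q, play_st (seqcomp C D) i k = Some (inr q).
    move=> k; have [q0 Hq0] := Hinf k.
    by exists (inl q0); apply: (@prefC _ _ _ C D HC HD i).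
  rewrite (@denot_inf _ _ (seqcomp C D) i HSinf) (@denot_inf _ _ C i Hinf).
  have EMP : play_MP (seqcomp C D) i = play_MP C i.
    rewrite /play_MP; do 3 f_equal; apply: functional_extensionality => N.
    rewrite (@psumC _ _ _ C D HC HD i) // => k' _; exact: Hinf.
  rewrite EMP.
  by case: excluded_middle_informative.
Qed.
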